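(* Let $n\ge2$, $\omega\in\mathbb{R}^n$, $k\in\mathbb{R}_{>0}^n$ satisfy (IC1) $\sum_\mu\omega_\mu=0$, (IC2) $\omega\ne0$, (IC3) $\left|\frac{\omega_1}{k_1}\right|\le\cdots\le\left|\frac{\omega_n}{k_n}\right|$. Let $\sigma\in\{-1,+1\}^n$ and $f_\sigma(R)=-R+\frac1n\sum_{\mu=1}^n\sigma_\mu\sqrt{k_\mu^2R-\omega_\mu^2}$. Then $f_\sigma$ has no positive roots if and only if $f_\sigma(R)<0$ for all $R\in\left[\left(\frac{\omega_n}{k_n}\right)^2,\infty\right)$.
   Context: Square roots are nonnegative real square roots; a positive root of $f_\sigma$ is a real $R>0$ with $k_\mu^2R-\omega_\mu^2\ge0$ for all $\mu$ and $f_\sigma(R)=0$. *)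

(* Defs.v *)
(* concrete reals R. Vectors in R^n are functions nat -> R,
   with indices 0..n-1 standing for the paper's 1..n. *)
From Stdlib Require Import Reals.
Open Scope R_scope.

Definition rsum (n : nat) (a : nat -> R) : R :=
  match n with O => 0 | S m => sum_f_R0 a m end.

Definition f_sigma (n : nat) (omega k sigma : nat -> R) (x : R) : R :=
  - x + / INR n * rsum n (fun mu => sigma mu * sqrt (k mu ^ 2 * x - omega mu ^ 2)).

Definition is_positive_root (n : nat) (omega k sigma : nat -> R) (x : R) : Prop :=
  0 < x /\ (forall mu, (mu < n)%nat -> 0 <= k mu ^ 2 * x - omega mu ^ 2) /\
  f_sigma n omega k sigma x = 0.

(* Main.v *)
Require Import Defs.
From Stdlib Require Import Reals Lra Lia Psatz.
From Coquelicot Require Import Coquelicot.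
Open Scope R_scope.

Lemma rsum_S m a : rsum (S m) a = rsum m a + a m.
Proof. destruct m; simpl; [ring| reflexivity]. Qed.

Lemma rsum_le m a b : (forall mu, (mu < m)%nat -> a mu <= b mu) -> rsum m a <= rsum m b.
Proof.
  induction m; intros H; [simpl; lra|]. rewrite !rsum_S.
  assert (rsum m a <= rsum m b) by (apply IHm; intros; apply H; lia).
  assert (a m <= b m) by (apply H; lia). lra.
Qed.

Lemma rsum_mult m a c : rsum m (fun mu => a mu * c) = rsum m a * c.
Proof. induction m; [simpl; ring|]. rewrite !rsum_S, IHm. ring. Qed.

Lemma rsum_0 m : rsum m (fun _ => 0) = 0.
Proof. induction m; [reflexivity|]. rewrite rsum_S, IHm. ring. Qed.

Lemma rsum_cont m (g : nat -> R -> R) : (forall mu, continuity (g mu)) ->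
  continuity (fun x => rsum m (fun mu => g mu x)).
Proof.
  intros H; induction m.
  - simpl. apply continuity_const. intros ? ?; reflexivity.
  - intros x. apply (continuity_pt_locally_ext (fun x => rsum m (fun mu => g mu x) + g m x) _ 1 x Rlt_0_1).
    + intros y _. rewrite rsum_S. reflexivity.
    + apply (continuity_plus _ _ IHm (H m)).
Qed.

Lemma sqrt_cont : continuity sqrt.
Proof. intros x. apply continuity_pt_filterlim. apply continuous_sqrt. Qed.

Lemma f_cont n omega k sigma : continuity (f_sigma n omega k sigma).
Proof.
  unfold f_sigma. apply continuity_plus.
  - apply continuity_opp, derivable_continuous, derivable_id.
  - apply continuity_mult; [apply continuity_const; intros ? ?; reflexivity|].
    apply rsum_cont. intros mu. apply continuity_mult.
    + apply continuity_const; intros ? ?; reflexivity.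
    + apply (continuity_comp (fun x => k mu ^ 2 * x - omega mu ^ 2) sqrt).
      * apply continuity_minus. apply continuity_mult.
        apply continuity_const; intros ? ?; reflexivity.
        apply derivable_continuous, derivable_id.
        apply continuity_const; intros ? ?; reflexivity.
      * apply sqrt_cont.
Qed.

Theorem lemma1 (n : nat) (omega k sigma : nat -> R)
  (Hn : (2 <= n)%nat)
  (Hk : forall mu, (mu < n)%nat -> 0 < k mu)
  (IC1 : rsum n omega = 0)
  (IC2 : exists mu, (mu < n)%nat /\ omega mu <> 0)
  (IC3 : forall mu, (S mu < n)%nat ->
           Rabs (omega mu / k mu) <= Rabs (omega (S mu) / k (S mu)))
  (Hsigma : forall mu, (mu < n)%nat -> sigma mu = 1 \/ sigma mu = -1) :
  (~ exists x, is_positive_root n omega k sigma x) <->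
  (forall x, (omega (pred n) / k (pred n)) ^ 2 <= x -> f_sigma n omega k sigma x < 0).
Proof.
  set (N := pred n).
  assert (HkN : 0 < k N) by (apply Hk; unfold N; lia).
  assert (chain : forall d mu, (mu + d = N)%nat ->
            Rabs (omega mu / k mu) <= Rabs (omega N / k N)).
  { induction d; intros mu Hd.
    - replace mu with N by lia. lra.
    - eapply Rle_trans; [apply IC3; unfold N in *; lia|]. apply IHd. lia. }
  assert (quot : forall mu x, (mu < n)%nat -> (omega N / k N) ^ 2 <= x ->
            0 <= k mu ^ 2 * x - omega mu ^ 2).
  { intros mu x Hmu Hx.
    assert (Hc := chain (N - mu)%nat mu ltac:(unfold N in *; lia)).
    assert (Hq : (omega mu / k mu) ^ 2 <= x).
    { rewrite <- pow2_abs. eapply Rle_trans; [|exact Hx]. rewrite <- (pow2_abs (omega N / k N)).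
      pose proof (Rabs_pos (omega mu / k mu)). nra. }
    assert (Hkm := Hk mu Hmu).
    assert (omega mu = (omega mu / k mu) * k mu) by (field; lra).
    set (q := omega mu / k mu) in *. rewrite H. nra. }
  split.
  - intros Hno x Hx.
    destruct (Rlt_or_le (f_sigma n omega k sigma x) 0) as [Hlt|Hge]; [exact Hlt|].
    exfalso. apply Hno.
    assert (apos : 0 < (omega N / k N) ^ 2).
    { destruct IC2 as [mu [Hmu Hom]].
      assert (Hc := chain (N - mu)%nat mu ltac:(unfold N in *; lia)).
      assert (0 < Rabs (omega mu / k mu)).
      { apply Rabs_pos_lt. unfold Rdiv. apply Rmult_integral_contrapositive.
        split; [exact Hom| apply Rinv_neq_0_compat; pose proof (Hk mu Hmu); lra]. }
      rewrite <- pow2_abs. nra. }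
    set (c := rsum n k / INR n).
    assert (Hnpos : 0 < INR n) by (apply lt_0_INR; lia).
    assert (c0 : 0 <= c).
    { unfold c. apply Rmult_le_pos; [|left; apply Rinv_0_lt_compat; lra].
      rewrite <- (rsum_0 n). apply rsum_le. intros mu Hmu. left; apply Hk; exact Hmu. }
    set (s := c + x + 1).
    set (X := s ^ 2).
    assert (HsX : sqrt X = s) by (unfold X; apply sqrt_pow2; unfold s; lra).
    assert (HxX : x < X) by (unfold X, s; nra).
    assert (HfX : f_sigma n omega k sigma X < 0).
    { unfold f_sigma.
      assert (rsum n (fun mu => sigma mu * sqrt (k mu ^ 2 * X - omega mu ^ 2))
              <= rsum n (fun mu => k mu * sqrt X)).
      { apply rsum_le. intros mu Hmu.
        assert (Hkm := Hk mu Hmu).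
        assert (sqrt (k mu ^ 2 * X - omega mu ^ 2) <= k mu * sqrt X).
        { assert (E : k mu * sqrt X = sqrt (k mu ^ 2 * X)).
          { rewrite sqrt_mult_alt by nra. rewrite sqrt_pow2 by lra. reflexivity. }
          rewrite E. apply sqrt_le_1_alt. pose proof (pow2_ge_0 (omega mu)). lra. }
        pose proof (sqrt_pos (k mu ^ 2 * X - omega mu ^ 2)).
        destruct (Hsigma mu Hmu) as [-> | ->]; lra. }
      rewrite rsum_mult, HsX in H.
      assert (/ INR n * rsum n (fun mu => sigma mu * sqrt (k mu ^ 2 * X - omega mu ^ 2))
              <= c * s).
      { unfold c. unfold Rdiv. rewrite Rmult_comm with (r1 := rsum n k).
        rewrite Rmult_assoc. apply Rmult_le_compat_l; [left; apply Rinv_0_lt_compat; lra| exact H]. }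
      unfold X, s in *. nra. }
    assert (Hprod : f_sigma n omega k sigma x * f_sigma n omega k sigma X <= 0).
    { set (u := f_sigma n omega k sigma x) in *. set (v := f_sigma n omega k sigma X) in *. nra. }
    destruct (IVT_cor (f_sigma n omega k sigma) x X (f_cont n omega k sigma)
                ltac:(lra) Hprod) as [z [Hz Hfz]].
    exists z. split; [lra|]. split; [|exact Hfz].
    intros mu Hmu. apply quot; [exact Hmu| lra].
  - intros Hneg [x [Hx [Hrad Hf]]].
    assert (HrN := Hrad N ltac:(unfold N; lia)).
    assert (omega N = (omega N / k N) * k N) by (field; lra).
    assert ((omega N / k N) ^ 2 <= x).
    { set (q := omega N / k N) in *. rewrite H in HrN.
      destruct (Rle_or_lt (q ^ 2) x) as [|Hl]; [assumption|]. exfalso.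
      assert (0 < k N ^ 2 * (q ^ 2 - x)) by (apply Rmult_lt_0_compat; [apply pow_lt; lra| lra]).
      assert ((q * k N) ^ 2 = k N ^ 2 * q ^ 2) by ring. lra. }
    specialize (Hneg x H0). lra.
Qed.
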